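(* Let $k\ge1$ and $n\ge k+1$ be integers. The number of (labeled) forests $F$ such that: the vertex set of $F$ is $\{1,\dots,k+1\}\cup R$ for some subset $R\subseteq\{k+2,\dots,n\}$; every tree of $F$ has at least two vertices; exactly one tree of $F$ contains no vertex of $R$, and this tree contains both vertices $1$ and $2$; and every other tree of $F$ contains exactly one vertex of $R$ (its root), is equal to $n^{k-1}$.
   Context: Forests are simple undirected acyclic graphs on the stated labeled vertex set; two forests are counted as different if their vertex sets or edge sets differ. *)

(* Defs.v *)
From mathcomp Require Import all_boot.
Set Implicit Arguments. Unset Strict Implicit. Unset Printing Implicit Defensive.

(* Vertex i of {1,...,n} is encoded as the ordinal i-1 : 'I_n.
   A (candidate) graph is a pair (V, E): a vertex set V and an edge set E,
   each edge being a 2-element subset of V. *)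
Definition graph n := ({set 'I_n} * {set {set 'I_n}})%type.

Section G.
Variable n : nat.
Implicit Types (G : graph n).

Definition gV G := G.1.
Definition gE G := G.2.

Definition simple_graph G : bool :=
  [forall e in gE G, (#|e| == 2) && (e \subset gV G)].

Definition adj G : rel 'I_n := fun x y => [set x; y] \in gE G.

Definition acyclic G : Prop :=
  forall s : seq 'I_n, uniq s -> 3 <= size s -> ~~ cycle (adj G) s.

Definition forest G : Prop := simple_graph G /\ acyclic G.

Definition comp G (v : 'I_n) : {set 'I_n} :=
  [set u in gV G | connect (adj G) v u].

Definition trees G : {set {set 'I_n}} := [set comp G v | v in gV G].

(* {1,...,k+1} *)
Definition low k : {set 'I_n} := [set i : 'I_n | i < k.+1].
End G.

Definition good n k (F : graph n) : Prop :=
  let R := gV F :\: low n k in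
  forest F /\
  (* V = {1..k+1} ∪ R with R ⊆ {k+2..n} *)
  low n k \subset gV F /\
  (forall T, T \in trees F -> 2 <= #|T|) /\
  (exists T0, [set T in trees F | [disjoint T & R]] = [set T0] /\
              (* vertices 1 and 2, i.e. ordinals 0 and 1 *)
              (forall v : 'I_n, val v < 2 -> v \in T0)) /\
  (forall T, T \in trees F -> ~~ [disjoint T & R] -> #|T :&: R| = 1).

Definition counts n (P : graph n -> Prop) (N : nat) : Prop :=
  exists s : seq (graph n), uniq s /\ (forall F, F \in s <-> P F) /\ size s = N.
Arguments good : clear implicits.
Arguments low : clear implicits.

(* Main.v *)
Require Import Defs.
From mathcomp Require Import all_boot.
Set Warnings "-notation-overridden".
From mathcomp Require Import zify.
Set Implicit Arguments. Unset Strict Implicit. Unset Printing Implicit Defensive.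

Section Count.
Variable T : finType.
Local Notation N := #|T|.
Implicit Types (R : {set T}) (p q : {ffun T -> T}).

Definition fixes R p := [forall r in R, p r == r].
Definition valid R p := fixes R p && [forall v, iter N p v \in R].
Definition rootf p v := iter N p v.

Lemma fixesP R p : reflect (forall r, r \in R -> p r = r) (fixes R p).
Proof.
apply: (iffP forallP) => [H r rR|H r]; first by move/implyP: (H r) => /(_ rR)/eqP.
by apply/implyP => /H ->.
Qed.

Lemma iter_fixed R p v t : fixes R p -> iter t p v \in R ->
  forall t', t <= t' -> iter t' p v = iter t p v.
Proof.
move=> /fixesP fx Ht t' le; rewrite -(subnK le) iterD.
by elim: (t' - t) => //= m ->; rewrite fx.
Qed.

Lemma reach R p v t : fixes R p -> iter t p v \in R -> iter N p v \in R.
Proof.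
move=> fx Ht.
have c : fconnect p v (iter t p v) := fconnect_iter p t v.
have lt := findex_max c.
have ord : order p v <= N.
  by rewrite -size_orbit -(card_uniqP (orbit_uniq p v)); exact: max_card.
have e : iter (findex p v (iter t p v)) p v = iter t p v := iter_findex c.
rewrite (iter_fixed fx (t:=findex p v (iter t p v))); rewrite ?e //.
exact: ltnW (leq_trans lt ord).
Qed.


Lemma agree (f g : T -> T) y v t : (forall w, w != y -> f w = g w) ->
  (forall i, i < t -> iter i f v != y) -> iter t f v = iter t g v.
Proof.
move=> fg; elim: t => // t IH H.
rewrite !iterS -IH; last by move=> i lt; apply: H; lia.
by apply: fg; apply: H.
Qed.

Lemma hit_or (f g : T -> T) y v t : f y = y -> (forall w, w != y -> f w = g w) ->
  iter t f v = iter t g v \/ iter t f v = y.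
Proof.
move=> fy fg; elim: t => [|t [IH|IH]]; [by left| |by right; rewrite iterS IH].
rewrite !iterS IH; case: (eqVneq (iter t g v) y) => [->|ne]; [by right; rewrite fy| by left; rewrite fg].
Qed.

Definition upd p y v := [ffun w => if w == y then v else p w].

Lemma upd_ne p y v w : w != y -> upd p y v w = p w.
Proof. by rewrite ffunE => /negbTE ->. Qed.

Lemma upd_y p y v : upd p y v y = v.
Proof. by rewrite ffunE eqxx. Qed.

Lemma split_valid R y p : y \notin R -> valid R p ->
  valid (y |: R) (upd p y y) && (rootf (upd p y y) (p y) != y).
Proof.
move=> yR /andP[fxb /forallP rt]; have fx := elimT (fixesP _ _) fxb.
set q := upd p y y.
have qp : forall w, w != y -> q w = p w by move=> w; apply: upd_ne.
have qy : q y = y by apply: upd_y.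
apply/andP; split; [apply/andP; split|].
- apply/fixesP => r; rewrite in_setU1 => /orP[/eqP->//|rR].
  rewrite qp ?fx //; apply: contraNneq yR => <- //.
- apply/forallP => w; case: (hit_or w N qy qp) => ->; last by rewrite setU11.
  by rewrite in_setU1 rt orbT.
- apply/negP => /eqP H.
  have ex : exists t, iter t q (p y) == y by exists N; apply/eqP.
  case: (ex_minnP ex) => t0 /eqP e0 min0.
  have ag : iter t0 q (p y) = iter t0 p (p y).
    apply: (agree qp) => i lt; apply/negP => /min0; lia.
  have per : iter t0.+1 p y = y by rewrite iterSr -ag.
  have perm : forall m, iter (m * t0.+1) p y = y.
    by elim=> // m IH; rewrite mulSn iterD IH per.
  have := iter_fixed fxb (rt y) (t' := N * t0.+1).
  rewrite perm => E; move: (rt y); rewrite -E; last by rewrite leq_pmulr.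
  by rewrite (negbTE yR).
Qed.

Lemma ext_valid R y p v : y \notin R -> valid (y |: R) p -> rootf p v != y ->
  valid R (upd p y v).
Proof.
move=> yR /andP[fxb /forallP rt] rv; have fx := elimT (fixesP _ _) fxb.
set q := upd p y v.
have pq : forall w, w != y -> p w = q w by move=> w ne; rewrite upd_ne.
have qy : q y = v by apply: upd_y.
have fxq : fixes R q.
  apply/fixesP => r rR; rewrite -pq ?fx ?in_setU1 ?rR ?orbT //.
  by apply: contraNneq yR => <-.
have nv : forall t, iter t p v != y.
  move=> t; apply/eqP => E.
  have y1 : iter t p v \in y |: R by rewrite E setU11.
  have e1 := iter_fixed fxb y1 (leq_maxl t N).
  have e2 := iter_fixed fxb (rt v) (leq_maxr t N).
  by move: rv; rewrite /rootf -e2 e1 E eqxx.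
have inR : forall w, iter N p w \in y |: R -> iter N p w != y -> iter N p w \in R.
  by move=> w; rewrite in_setU1 => /orP[->//|].
apply/andP; split => //; apply/forallP => w.
case: (boolP [exists t : 'I_N.+1, iter t q w == y]) => [/existsP[t /eqP ht]|].
  apply: (reach (t := N + t.+1) fxq).
  rewrite iterD iterS ht qy -(agree pq (v:=v) (t:=N)); last by move=> *; apply: nv.
  by apply: inR; [apply: rt | apply: nv].
move=> nex.
have : forall i, i < N.+1 -> iter i q w != y.
  move=> i lt; apply/negP => E; move/negP: nex; apply; apply/existsP.
  by exists (Ordinal lt).
move=> nq1.
have e := agree (fun w ne => esym (pq w ne)) (fun i lt => nq1 i (ltnW lt)).
rewrite e; apply: inR; first exact: rt.
by rewrite -e; apply: nq1.
Qed.


Definition sw (a b v : T) := if v == a then b else if v == b then a else v.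

Lemma swK a b : involutive (sw a b).
Proof.
move=> v; rewrite /sw; case: (eqVneq v a) => [->|va].
  by case: (eqVneq b a) => [->|_] //=; rewrite eqxx.
case: (eqVneq v b) => [->|vb]; first by rewrite eqxx.
by rewrite (negbTE va) (negbTE vb).
Qed.

Lemma sw_in a b R v : a \in R -> b \in R -> (sw a b v \in R) = (v \in R).
Proof.
move=> aR bR; rewrite /sw; case: (eqVneq v a) => [->|_]; first by rewrite aR bR.
by case: (eqVneq v b) => [->|_]; rewrite ?aR ?bR.
Qed.

Lemma sw_eq a b v : (sw a b v == b) = (v == a).
Proof.
rewrite /sw; case: (eqVneq v a) => [_|va]; first by rewrite eqxx.
case: (eqVneq v b) => [e|vb]; first by rewrite -e eq_sym (negbTE va).
by apply/negbTE.
Qed.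

Lemma sw_fix a b v : v != a -> v != b -> sw a b v = v.
Proof. by rewrite /sw => /negbTE -> /negbTE ->. Qed.

Definition cj a b p := [ffun v => sw a b (p (sw a b v))].

Lemma iter_cj a b p t v : iter t (cj a b p) v = sw a b (iter t p (sw a b v)).
Proof. by elim: t => [|t IH] /=; [rewrite swK | rewrite IH ffunE swK]. Qed.

Lemma cjK a b : involutive (cj a b).
Proof. by move=> p; apply/ffunP => v; rewrite !ffunE !swK. Qed.

Lemma valid_cj R a b p : a \in R -> b \in R -> valid R p -> valid R (cj a b p).
Proof.
move=> aR bR /andP[/fixesP fx /forallP rt]; apply/andP; split.
  by apply/fixesP => r rR; rewrite ffunE fx ?swK // sw_in.
by apply/forallP => v; rewrite iter_cj sw_in.
Qed.

Definition sz r p := \sum_(v : T) (rootf p v == r).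

Lemma sz_cj a b p : sz b (cj a b p) = sz a p.
Proof.
rewrite /sz (reindex_inj (can_inj (swK a b))) /=.
by apply: eq_bigr => v _; rewrite /rootf iter_cj swK sw_eq.
Qed.

Lemma sz_le r p : sz r p <= N.
Proof.
rewrite -sum1_card; apply: leq_sum => v _; exact: leq_b1.
Qed.

Lemma sum_sz R p : valid R p -> \sum_(r in R) sz r p = N.
Proof.
move=> /andP[_ /forallP rt]; rewrite /sz exchange_big /= -sum1_card.
apply: eq_bigr => v _; rewrite (bigD1 (rootf p v)) ?rt //= eqxx big1 //.
by move=> r /andP[_ ne]; rewrite eq_sym (negbTE ne).
Qed.


Lemma sum_cond_card (P : pred T) : \sum_(v | P v) 1 = \sum_v (P v : nat).
Proof. by rewrite big_mkcond; apply: eq_bigr => v _; case: (P v). Qed.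

Lemma sz_compl r p : N - sz r p = \sum_(v | rootf p v != r) 1.
Proof.
rewrite sum_cond_card /sz -sum1_card.
have -> : \sum_(i in T) 1 = \sum_v ((rootf p v == r) + (rootf p v != r)).
  by apply: eq_bigr => v _; case: (rootf p v == r).
by rewrite big_split /= addKn.
Qed.

Lemma count_valid j : forall R, N - #|R| = j -> 0 < #|R| ->
  #|[set p | valid R p]| * N = #|R| * N ^ j.
Proof.
elim: j => [|j IH] R hj hR.
  have RT : R = setT by apply/eqP; rewrite eqEcard subsetT cardsT; lia.
  subst R.
  have -> : [set p | valid setT p] = [set [ffun v => v]].
    apply/setP => p; rewrite !inE; apply/idP/idP.
      move=> /andP[/fixesP fx _]; apply/eqP/ffunP => v; rewrite ffunE fx //.
    move=> /eqP ->; apply/andP; split; last by apply/forallP => v; rewrite inE.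
    by apply/fixesP => r _; rewrite ffunE.
  by rewrite cards1 cardsT mul1n expn0 muln1.
have : 0 < #|~: R| by rewrite cardsCs setCK; lia.
rewrite card_gt0 => /set0Pn[y]; rewrite inE => yR.
set R' := y |: R.
have cR' : #|R'| = #|R|.+1 by rewrite cardsU1 yR.
have IH' := IH R' ltac:(lia) ltac:(lia).
set VR' := [set p | valid R' p] in IH'.
set Pairs := [set q : {ffun T -> T} * T | valid R' q.1 && (rootf q.1 q.2 != y)].
pose ext := fun q : {ffun T -> T} * T => upd q.1 y q.2.
have E1 : [set p | valid R p] = ext @: Pairs.
  apply/setP => p; rewrite inE; apply/idP/imsetP.
    move=> vp; exists (upd p y y, p y); first by rewrite inE /= split_valid.
    apply/ffunP => w; rewrite /ext /= !ffunE; by case: (eqVneq w y) => [->|].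
  by move=> [q]; rewrite inE => /andP[vq rq] ->; apply: ext_valid.
have E2 : {in Pairs &, injective ext}.
  move=> [p1 v1] [p2 v2]; rewrite !inE /= => /andP[/andP[/fixesP f1 _] _]
    /andP[/andP[/fixesP f2 _] _] e.
  have ev : v1 = v2 by move: (congr1 (fun f : {ffun T -> T} => f y) e); rewrite /ext /= !upd_y.
  congr (_, _) => //; apply/ffunP => w; case: (eqVneq w y) => [->|ne].
    by rewrite f1 ?f2 // setU11.
  by move: (congr1 (fun f : {ffun T -> T} => f w) e); rewrite /ext /= !upd_ne.
have E3 : #|Pairs| = \sum_(p in VR') (N - sz y p).
  rewrite (eq_bigr (fun p => \sum_(v | rootf p v != y) 1)); last by move=> p _; apply: sz_compl.
  rewrite (eq_bigl (fun p => valid R' p)); last by move=> p; rewrite inE.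
  by rewrite pair_big_dep /= sum1dep_card.
set S := \sum_(p in VR') sz y p.
have E4 : forall r, r \in R' -> \sum_(p in VR') sz r p = S.
  move=> r rR; rewrite /S [RHS](reindex_inj (can_inj (cjK r y))) /=.
  apply: eq_big => [p|p _]; last by rewrite sz_cj.
  rewrite !inE; apply/idP/idP => [/(valid_cj rR (setU11 y R))|/(valid_cj rR (setU11 y R))] //.
  by rewrite cjK.
have E5 : #|R'| * S = #|VR'| * N.
  rewrite -sum_nat_const -(eq_bigr _ E4) exchange_big /= -sum_nat_const.
  by apply: eq_bigr => p; rewrite inE => /sum_sz.
have E6 : \sum_(p in VR') (N - sz y p) = #|VR'| * N - S.
  by rewrite sumnB ?sum_nat_const // => p _; apply: sz_le.
have hF : #|[set p | valid R p]| = #|VR'| * N - S by rewrite E1 card_in_imset // E3 E6.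
have SN : S <= #|VR'| * N by rewrite -sum_nat_const; apply: leq_sum => p _; apply: sz_le.
rewrite cR' in E5 IH'.
apply/eqP; rewrite -(eqn_pmul2l (ltn0Sn #|R|)); apply/eqP.
rewrite hF expnS; clear E1 E2 E3 E4 E6 hF.
move: (#|R|) (#|VR'| * N) S (N ^ j) E5 IH' SN => m a S' X h1 h2 h3.
have h4 : m.+1 * (a - S') = m * a by rewrite mulnBr h1 mulSn addKn.
by rewrite mulnA h4 h2; nia.
Qed.

Lemma count_root R x r0 : x \notin R -> r0 \in R ->
  #|[set p | valid R p && (rootf p x == r0)]| * N = N ^ (N - #|R|).
Proof.
move=> xR r0R.
pose G r := \sum_(p | valid R p) (rootf p x == r : nat).
have eG : forall r, #|[set p | valid R p && (rootf p x == r)]| = G r.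
  move=> r; rewrite -sum1dep_card /G big_mkcondr /=; apply: eq_bigr => p _.
  by case: (rootf p x == r).
have Gs : forall r, r \in R -> G r = G r0.
  move=> r rR; rewrite /G [RHS](reindex_inj (can_inj (cjK r r0))) /=.
  apply: eq_big => [p|p vp].
    apply/idP/idP => [/(valid_cj rR r0R)|/(valid_cj rR r0R)] //; by rewrite cjK.
  have xr : x != r by apply: contraNneq xR => ->.
  have xr0 : x != r0 by apply: contraNneq xR => ->.
  by rewrite /rootf iter_cj (sw_fix xr xr0) sw_eq.
have sumG : \sum_(r in R) G r = #|[set p | valid R p]|.
  rewrite /G exchange_big /= -sum1dep_card; apply: eq_bigr => p vp.
  move: vp => /andP[_ /forallP rt].
  rewrite (bigD1 (rootf p x)) ?rt //= eqxx big1 //.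
  by move=> r /andP[_ ne]; rewrite eq_sym (negbTE ne).
have R0 : 0 < #|R| by apply/card_gt0P; exists r0.
have cV := count_valid (erefl (N - #|R|)) R0.
rewrite -sumG (eq_bigr _ Gs) sum_nat_const in cV.
rewrite eG; apply/eqP; rewrite -(eqn_pmul2l R0).
by rewrite mulnA cV.
Qed.

Definition depth R p v := \sum_(t < N) (iter t p v \notin R : nat).

Lemma depth0 R p v : fixes R p -> v \in R -> depth R p v = 0.
Proof.
move=> fx vR; apply: big1 => t _.
by rewrite (iter_fixed fx (t:=0)) //= vR.
Qed.

Lemma depthS R p v : valid R p -> v \notin R -> depth R p v = (depth R p (p v)).+1.
Proof.
move=> /andP[fx /forallP rt] vR.
have : 0 < N by apply/card_gt0P; exists v.
rewrite /depth; case: #|T| (rt v) (rt (p v)) => // n' rt1 rt2 _.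
rewrite big_ord_recl big_ord_recr /= vR add1n; congr _.+1.
rewrite -iterSr rt1 /= addn0.
by apply: eq_bigr => i _; rewrite add0n -iterS iterSr.
Qed.

End Count.

Lemma last_take (T : Type) (x : T) s i : i <= size s -> last x (take i s) = nth x (x :: s) i.
Proof.
elim: s x i => [|y s IH] x [|i] //= H.
by rewrite (set_nth_default y) //; apply: IH.
Qed.

Lemma small_cases x y : x.+1 + y < 3 ->
  (x = 0 /\ y = 0) \/ (x = 1 /\ y = 0) \/ (x = 0 /\ y = 1).
Proof. lia. Qed.

Lemma two_paths (T : eqType) (e : rel T) (esym : symmetric e)
  (acyc : forall s, uniq s -> 3 <= size s -> ~~ cycle e s) a b sa sb :
  e a b -> a != b -> uniq (a :: sa) -> uniq (b :: sb) -> path e a sa -> path e b sb ->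
  last a sa = last b sb ->
  nth a (a :: sa) 1 = b \/ nth b (b :: sb) 1 = a.
Proof.
move=> eab ab ua ub pa pb lab.
set sA := a :: sa; set sB := b :: sb.
have hasA : has (mem sB) sA.
  by apply/hasP; exists (last a sa); [exact: mem_last | rewrite lab; exact: mem_last].
set i := find (mem sB) sA.
have iA : i < size sA by rewrite -has_find.
set c := nth a sA i.
have cB : c \in sB by exact: (nth_find a hasA).
have bef : forall i', i' < i -> nth a sA i' \notin sB.
  by move=> i' lt; apply/negbT; exact: (before_find a lt).
set j := index c sB.
have jB : j < size sB by rewrite index_mem.
have cj : nth b sB j = c by exact: nth_index.
set t := take j sb.
set L := belast b t.
have lt : last b t = c by rewrite /t last_take // -ltnS.
have ubt : uniq (b :: t) by have := take_uniq j.+1 ub.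
have uL : uniq (rcons L c) by rewrite -lt -lastI.
rewrite rcons_uniq in uL; case/andP: uL => cL uL.
have LB : forall x, x \in L -> x \in sB.
  move=> x xL; have : x \in rcons L c by rewrite mem_rcons inE xL orbT.
  rewrite -lt -lastI inE => /orP[/eqP->|/mem_take xs]; first exact: mem_head.
  by rewrite inE xs orbT.
set q := take i.+1 sA ++ rev L.
have lta : last a (take i sa) = c by rewrite last_take // -ltnS.
have uq : uniq q.
  rewrite cat_uniq take_uniq // rev_uniq uL andbT.
  apply/hasPn => x; rewrite mem_rev => xL; apply/negP => xt.
  have xi := index_ltn xt; rewrite ltnS leq_eqVlt in xi.
  have xA : x \in sA by exact: mem_take xt.
  case/orP: xi => [/eqP xi|xi].
    by move: cL; rewrite /c -xi nth_index // xL.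
  by move: (bef _ xi); rewrite nth_index // LB.
have sq : size q = i.+1 + j.
  by rewrite size_cat size_takel // size_rev size_belast /t size_takel // -ltnS.
have lastq : last a q = b.
  have lrev : forall u, last c (rev (belast b u)) = (if u is [::] then c else b).
    by case=> //= y u'; rewrite rev_cons last_rcons.
  rewrite /q /sA /= last_cat lta /L lrev.
  case Et: t => [|y t'] //.
  by rewrite -lt Et.
have pq : path e a (behead q).
  rewrite /q /sA /= cat_path take_path //= lta.
  have ee : (fun z => e^~ z) =2 e by move=> x y; rewrite /= esym.
  by rewrite -lt /L rev_path (eq_path ee); apply: take_path.
have cq : cycle e q.
  rewrite /q /sA /=; rewrite rcons_path; apply/andP; split; first exact: pq.
  by move: lastq; rewrite /q /sA /= => ->; rewrite esym.
case: (leqP 3 (size q)) => [h3|h3]; first by move: (acyc _ uq h3); rewrite cq.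
rewrite sq in h3.
have ca : nth a sA i = c by [].
have [[i0 j0]|[[i1 j0]|[i0 j1]]] := small_cases h3.
- by move: ca cj ab; rewrite i0 j0 /= => -> ->; rewrite eqxx.
- by left; move: ca cj; rewrite i1 j0 /= => -> <-.
- by right; move: ca cj; rewrite i0 j1 /= => <- <-.
Qed.

Section Traj.
Variable T : finType.
Implicit Types (R : {set T}) (p : {ffun T -> T}).

Fixpoint traj R p m v : seq T :=
  if m is m'.+1 then (if v \in R then [::] else p v :: traj R p m' (p v)) else [::].

Lemma rootf_p R p v : valid R p -> rootf p (p v) = rootf p v.
Proof.
case/andP => fx /forallP rt.
by rewrite /rootf -iterSr (iter_fixed fx (rt v) (leqnSn _)).
Qed.

Lemma traj_spec R p (vp : valid R p) (e : rel T) (he : forall w, w \notin R -> e w (p w)) :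
  forall m v, depth R p v = m ->
  [/\ path e v (traj R p m v), last v (traj R p m v) = rootf p v, uniq (v :: traj R p m v),
     nth v (v :: traj R p m v) 1 = p v & forall x, x \in traj R p m v -> depth R p x < m].
Proof.
have [fx _] := andP vp.
elim=> [|m IH] v dv /=.
  have vR : v \in R.
    by apply: contraT => vR; move: dv; rewrite (depthS vp vR).
  split => //; first by rewrite /rootf (iter_fixed fx (t:=0)).
  by rewrite (fixesP _ _ fx).
have vR : v \notin R by apply/negP => vR; move: dv; rewrite (depth0 fx vR).
rewrite (negbTE vR).
have dpv : depth R p (p v) = m by move: dv; rewrite (depthS vp vR) => -[].
have [IH1 IH2 IH3 IH4 IH5] := IH _ dpv.
split => //.
- by rewrite /= he.
- by rewrite /= IH2 (rootf_p _ vp).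
- rewrite cons_uniq; apply/andP; split; last exact: IH3.
  apply/negP; rewrite inE => /orP[/eqP e1|/IH5]; last by rewrite dv ltnNge leqnSn.
  by move: dpv; rewrite -e1 dv => /eqP; rewrite eqn_leq ltnn.
- by move=> x; rewrite inE => /orP[/eqP->|/IH5/ltnW]; rewrite ?dpv ?ltnS.
Qed.

End Traj.


Lemma set2_eq (T : finType) (a b c d : T) : [set a; b] = [set c; d] ->
  (a = c /\ b = d) \/ (a = d /\ b = c).
Proof.
move=> e.
have ha : a \in [set c; d] by rewrite -e !inE eqxx.
have hb : b \in [set c; d] by rewrite -e !inE eqxx orbT.
have hc : c \in [set a; b] by rewrite e !inE eqxx.
have hd : d \in [set a; b] by rewrite e !inE eqxx orbT.
move: ha hb hc hd; rewrite !inE.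
by case/orP=> /eqP ha; case/orP=> /eqP hb; case/orP=> /eqP hc; case/orP=> /eqP hd;
  subst; auto.
Qed.

Lemma adj_sym n (G : graph n) : symmetric (adj G).
Proof.
move=> x y; rewrite /adj (_ : [set x; y] = [set y; x]) //; apply/setP => z; rewrite !inE orbC //.
Qed.

Lemma set2C (T : finType) (a b : T) : [set a; b] = [set b; a].
Proof. by apply/setP => z; rewrite !inE orbC. Qed.

Section Graph.
Variables (n k : nat).
Hypotheses (hk : 1 <= k) (hn : k.+1 <= n).

Definition o0 : 'I_n := Ordinal (leq_ltn_trans (leq0n k) hn).
Definition o1 : 'I_n := Ordinal (leq_ltn_trans hk hn).

Definition Xs : {set 'I_n} := [set i : 'I_n | 0 < i <= k].
Definition R0 : {set 'I_n} := ~: Xs.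
Definition Phi (p : {ffun 'I_n -> 'I_n}) : graph n :=
  (low n k :|: p @: Xs, [set [set v; p v] | v in Xs]).

Lemma X_low : Xs \subset low n k.
Proof. by apply/subsetP => v; rewrite /low /Xs !inE => /andP[_]; rewrite ltnS. Qed.

Lemma o0R : o0 \in R0.
Proof. by rewrite /R0 /Xs !inE. Qed.

Lemma o1X : o1 \in Xs.
Proof. by rewrite /Xs !inE /=. Qed.

Lemma o0low : o0 \in low n k.
Proof. by rewrite /low !inE. Qed.

Lemma low_cases v : v \in low n k -> v \in Xs \/ v = o0.
Proof.
rewrite /low inE ltnS => vk; case: (posnP v) => [v0|vp]; last by left; rewrite /Xs inE vp vk.
by right; apply: val_inj; rewrite /= v0.
Qed.

Lemma lowR0 v : v \in low n k -> v \in R0 -> v = o0.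
Proof. by move/low_cases => [vX|//]; rewrite /R0 inE vX. Qed.

Section Fwd.
Variable p : {ffun 'I_n -> 'I_n}.
Hypotheses (vp : valid R0 p) (rp : rootf p o1 = o0).

Local Notation V := (low n k :|: p @: Xs).
Local Notation G := (Phi p).

Lemma fxp r : r \in R0 -> p r = r.
Proof. by move=> rR; case/andP: vp => /fixesP H _; exact: H. Qed.

Lemma rtR v : rootf p v \in R0.
Proof. by case/andP: vp => _ /forallP; apply. Qed.

Lemma root_p v : rootf p (p v) = rootf p v.
Proof.
case/andP: vp => fx _.
by rewrite /rootf -iterSr (iter_fixed fx (rtR v) (leqnSn _)).
Qed.

Lemma root_fix r : r \in R0 -> rootf p r = r.
Proof.
case/andP: vp => fx _ rR.
by rewrite /rootf (iter_fixed fx (t:=0)) //.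
Qed.

Lemma pX v : v \in Xs -> p v != v.
Proof.
move=> vX; apply/eqP => e.
have : rootf p v = v by rewrite /rootf; elim: #|_| => //= m ->.
by move=> e2; move: (rtR v); rewrite e2 inE vX.
Qed.

Lemma adjP a b : adj G a b -> (a \in Xs /\ b = p a) \/ (b \in Xs /\ a = p b).
Proof.
rewrite /adj /= => /imsetP[w wX] /set2_eq [[-> ->]|[-> ->]]; [left|right]; by [].
Qed.

Lemma adj_pv v : v \in Xs -> adj G v (p v).
Proof. by move=> vX; rewrite /adj /=; apply/imsetP; exists v. Qed.

Lemma adj_root a b : adj G a b -> rootf p a = rootf p b.
Proof. by case/adjP => [[_ ->]|[_ ->]]; rewrite root_p. Qed.

Lemma conn_iter v t : connect (adj G) v (iter t p v).
Proof.
elim: t => [|t IH]; first exact: connect0.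
rewrite iterS; case: (boolP (iter t p v \in Xs)) => [iX|iX].
  by apply: connect_trans IH (connect1 (adj_pv iX)).
by rewrite fxp // inE.
Qed.

Lemma conn_root a b : connect (adj G) a b = (rootf p a == rootf p b).
Proof.
apply/idP/eqP.
  case/connectP => s; elim: s a => [|c s IH] a /=; first by move=> _ ->.
  by case/andP => /adj_root -> /IH.
move=> e.
have sy := sym_connect_sym (@adj_sym n G).
apply: connect_trans (conn_iter a #|'I_n|) _.
rewrite -/(rootf p a) e sy; exact: conn_iter.
Qed.

Lemma comp_eq v : Defs.comp G v = [set u in V | rootf p u == rootf p v].
Proof. by apply/setP => u; rewrite !inE conn_root eq_sym. Qed.

Lemma XR0 v : (v \in R0) = (v \notin Xs).
Proof. by rewrite /R0 inE. Qed.

Lemma V_cases v : v \in V -> [\/ v \in Xs, v = o0 | exists2 w, w \in Xs & v = p w].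
Proof.
rewrite inE => /orP[/low_cases[]|/imsetP[w wX ->]]; by [constructor 1|constructor 2|constructor 3; exists w].
Qed.

Lemma iter_XV v t : v \in Xs -> (iter t p v \in Xs) || (iter t p v \in p @: Xs).
Proof.
move=> vX; elim: t => [|t]; first by rewrite vX.
case/orP => [iX|/imsetP[w wX e]]; rewrite iterS.
  by rewrite (imset_f p iX) orbT.
case: (boolP (iter t p v \in Xs)) => [iX|iX]; first by rewrite (imset_f p iX) orbT.
by rewrite fxp ?XR0 // e (imset_f p wX) orbT.
Qed.

Lemma root_V v : v \in V -> rootf p v \in V.
Proof.
have hX : forall w, w \in Xs -> rootf p w \in V.
  move=> w wX; case/orP: (iter_XV #|'I_n| wX) => H; rewrite inE ?H ?orbT //.
  by rewrite (subsetP X_low _ H).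
case/V_cases => [/hX//|->|[w wX ->]]; last by rewrite root_p hX.
by rewrite root_fix ?o0R // inE o0low.
Qed.

Lemma RR_R0 r : r \in V :\: low n k -> r \in R0.
Proof.
move=> /setDP[_ rl]; rewrite XR0; apply: contra rl; exact: (subsetP X_low).
Qed.

Lemma V_R0 w : w \in V -> w \in R0 -> w = o0 \/ w \in V :\: low n k.
Proof.
move=> wV wR; case: (boolP (w \in low n k)) => wl; first by left; apply: lowR0.
by right; rewrite inE wl.
Qed.

Lemma comp_root v : v \in V -> rootf p v \in Defs.comp G v.
Proof. by move=> vV; rewrite comp_eq inE root_V //= (root_fix (rtR v)). Qed.

Lemma comp_other v : v \in V -> exists2 u, u \in Defs.comp G v & u != v.
Proof.
move=> vV; case/V_cases: (vV) => [vX|->|[w wX e]].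
- exists (rootf p v); first exact: comp_root.
  by apply: contraTneq (rtR v) => ->; rewrite XR0 vX.
- exists o1; first by rewrite comp_eq inE rp root_fix ?o0R // eqxx andbT inE (subsetP X_low _ o1X).
  by apply/eqP => /(congr1 val).
- exists w; first by rewrite comp_eq inE e root_p eqxx andbT inE (subsetP X_low _ wX).
  by rewrite e eq_sym pX.
Qed.

Lemma simple_Phi : simple_graph G.
Proof.
apply/forallP => e; apply/implyP => /imsetP[v vX ->].
rewrite cards2 (eq_sym v) pX //=; apply/subsetP => w; rewrite in_set2 in_setU.
case/orP => /eqP ->; first by rewrite (subsetP X_low _ vX).
by rewrite (imset_f p vX) orbT.
Qed.

Lemma acyclic_Phi : acyclic G.
Proof.
move=> s us hs; apply/negP => cs.
have [x0 x0s] : exists x0, x0 \in s by case: s us hs cs => // x s' *; exists x; rewrite mem_head.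
case: (@arg_maxnP _ x0 (mem s) (depth R0 p) x0s) => v vs vmax.
case: (rot_to vs) => i t e.
have ct : cycle (adj G) (v :: t) by rewrite -e rot_cycle.
have ut : uniq (v :: t) by rewrite -e rot_uniq.
have st : size (v :: t) = size s by rewrite -e size_rot.
have mt : forall x, x \in t -> x \in s by move=> x xt; rewrite -(mem_rot i) e inE xt orbT.
have ht : 1 < size t by move: st => /= st; lia.
clear e st; case: t ct ut ht mt => [|b [|c t']] // ct ut _ mt.
move: ct; rewrite /= rcons_path => /andP[vb /andP[pbt /andP[_ ca]]].
set a := last c t' in ca.
have ab : a != b.
  case/andP: ut => _ /andP[bt _]; apply: contraNneq bt => <-.
  exact: mem_last.
have big : forall x, x \in Xs -> p x = v -> x \in s -> False.
  move=> x xX pxv xs; have := vmax x xs; rewrite /geq (depthS vp (v:=x)); last by rewrite XR0 negbK.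
  by rewrite pxv /= ltnn.
case: (adjP vb) => [[vX bv]|[bX vb']]; last by apply: (big b bX (esym vb')); apply: mt; rewrite mem_head.
case: (adjP ca) => [[aX va]|[_ av]].
  by apply: (big a aX (esym va)); apply: mt; rewrite /a in_cons mem_last orbT.
by move/eqP: ab; apply; rewrite av bv.
Qed.

Lemma comp_self v : v \in V -> v \in Defs.comp G v.
Proof. by move=> vV; rewrite comp_eq inE vV eqxx. Qed.

Lemma RR_root u : u \in V :\: low n k -> rootf p u = u.
Proof. by move=> /RR_R0 /root_fix. Qed.

Lemma good_Phi : good n k G.
Proof.
rewrite /good /=.
split; first by split; [apply: simple_Phi | apply: acyclic_Phi].
split; first by apply: subsetUl.
split.
  move=> T /imsetP[v vV ->]; case: (comp_other vV) => u uc uv.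
  have -> : 2 = #|[set u; v]| by rewrite cards2 uv.
  apply: subset_leq_card; apply/subsetP => w; rewrite in_set2.
  by case/orP => /eqP ->; [|apply: comp_self].
split.
  exists (Defs.comp G o0); split.
    apply/setP => T; rewrite inE in_set1; apply/andP/eqP.
      move=> [/imsetP[v vV ->] dj].
      have rc := comp_root vV.
      case: (V_R0 (root_V vV) (rtR v)) => [r0|rRR].
        by rewrite !comp_eq; apply/setP => u; rewrite !inE r0 (root_fix o0R).
      by rewrite (disjointFr dj rc) in rRR.
    move=> ->; split; first by apply/imsetP; exists o0 => //; rewrite inE o0low.
    rewrite disjoints_subset; apply/subsetP => u; rewrite comp_eq inE => /andP[uV ru].
    rewrite inE; apply/negP => uRR.
    move: ru; rewrite (RR_root uRR) (root_fix o0R) => /eqP uo.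
    by move: uRR; rewrite inE uo o0low.
  move=> v v2.
  have [-> | ->] : v = o0 \/ v = o1.
    by case: v v2 => [[|[|m]] ?] //= _; [left|right]; apply: val_inj.
    by apply: comp_self; rewrite inE o0low.
  by rewrite comp_eq inE rp (root_fix o0R) eqxx andbT inE (subsetP X_low _ o1X).
move=> T /imsetP[v vV ->]; rewrite -setI_eq0 => /set0Pn[u].
rewrite inE => /andP[uc uRR].
suff -> : Defs.comp G v :&: (V :\: low n k) = [set u] by rewrite cards1.
apply/setP => w; rewrite in_set1 inE; apply/andP/eqP => [[wc wRR]|->//].
move: wc uc; rewrite !comp_eq !inE => /andP[_ /eqP wr] /andP[_ /eqP ur].
by rewrite -(RR_root wRR) -(RR_root uRR) wr ur.
Qed.

End Fwd.

Lemma Phi_inj p q : valid R0 p -> valid R0 q -> Phi p = Phi q -> p = q.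
Proof.
move=> vp vq e.
have H : forall d v, depth R0 p v <= d -> p v = q v.
  elim=> [|d IH] v hd; (case: (boolP (v \in Xs)) => vX;
    last by rewrite (fxp vp) ?(fxp vq) ?XR0).
    by move: hd; rewrite (depthS vp) ?XR0 ?negbK.
  have hp : depth R0 p (p v) <= d by move: hd; rewrite (depthS vp) ?XR0 ?negbK.
  have : [set v; p v] \in gE (Phi q) by rewrite -e; apply/imsetP; exists v.
  case/imsetP => w wX /set2_eq [[<- ->]//|[vq' pw]].
  subst w.
  have qpv := IH _ hp.
  have ppv : p (p v) = v by rewrite qpv.
  have : forall t, iter t p v \in [set v; p v].
    elim=> [|t IHt]; first by rewrite in_set2 eqxx.
    by rewrite iterS; move: IHt; rewrite !in_set2 => /orP[]/eqP->; rewrite ?ppv eqxx ?orbT.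
  move=> /(_ #|'I_n|); rewrite in_set2 => /orP[]/eqP E; have := rtR vp v;
    rewrite /rootf E XR0 ?vX ?wX //.
apply/ffunP => v; exact: (H _ v (leqnn _)).
Qed.

Section Bwd.
Variable F : graph n.
Hypothesis hF : good n k F.

Local Notation V := (gV F).
Local Notation E := (gE F).
Local Notation RR := (gV F :\: low n k).
Local Notation A := (adj F).
Local Notation C := (Defs.comp F).

Lemma hsimple : simple_graph F.
Proof. by move: hF; rewrite /good /forest => -[[H _] _]. Qed.
Lemma hacyc : acyclic F.
Proof. by move: hF; rewrite /good /forest => -[[_ H] _]. Qed.
Lemma hlow : low n k \subset V.
Proof. by move: hF; rewrite /good => -[_ [H _]]. Qed.
Lemma htree2 T : T \in trees F -> 2 <= #|T|.
Proof. by move: hF T; rewrite /good => -[_ [_ [H _]]]. Qed.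
Lemma hT0 : exists T0, [set T in trees F | [disjoint T & RR]] = [set T0] /\
              (forall v : 'I_n, val v < 2 -> v \in T0).
Proof. by move: hF; rewrite /good => -[_ [_ [_ [H _]]]]. Qed.
Lemma hsing T : T \in trees F -> ~~ [disjoint T & RR] -> #|T :&: RR| = 1.
Proof. by move: hF T; rewrite /good => -[_ [_ [_ [_ H]]]]. Qed.

Lemma csym : connect_sym A.
Proof. exact: sym_connect_sym (@adj_sym n F). Qed.

Lemma adjV a b : A a b -> [/\ a \in V, b \in V & a != b].
Proof.
move=> ab; have := hsimple; move/forallP/(_ [set a; b])/implyP/(_ ab) => /andP[c2 sub].
rewrite cards2 in c2; split; [by apply: (subsetP sub); rewrite in_set2 eqxx | by apply: (subsetP sub); rewrite in_set2 eqxx orbT | by move: c2; case: (a != b)].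
Qed.

Lemma compE v u : (u \in C v) = (u \in V) && connect A v u.
Proof. by rewrite inE. Qed.

Lemma C_same x u : u \in C x -> C u = C x.
Proof.
rewrite compE => /andP[_ xu]; apply/setP => w; rewrite !compE.
by rewrite (same_connect csym xu).
Qed.

Lemma self_C v : v \in V -> v \in C v.
Proof. by move=> vV; rewrite compE vV connect0. Qed.

Lemma adjC a b : A a b -> C b = C a.
Proof.
move=> ab; case: (adjV ab) => aV bV _; apply: C_same.
by rewrite compE bV connect1.
Qed.

Lemma lowV v : v \in low n k -> v \in V.
Proof. exact: (subsetP hlow). Qed.

Lemma XV v : v \in Xs -> v \in V.
Proof. by move/(subsetP X_low)/lowV. Qed.

Lemma dis_C0 v : v \in V -> [disjoint C v & RR] -> C v = C o0.
Proof.
move=> vV dj; case: hT0 => T0 [e0 m0].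
have : C v \in [set T0] by rewrite -e0 inE dj andbT; apply/imsetP; exists v.
rewrite in_set1 => /eqP ->.
have : T0 \in [set T0] by rewrite in_set1.
rewrite -e0 inE => /andP[/imsetP[x xV ex] _]; subst T0.
by rewrite (C_same (m0 o0 _)).
Qed.

Lemma o0V : o0 \in V.
Proof. by apply: lowV; apply: o0low. Qed.

Lemma o1V : o1 \in V.
Proof. by apply: XV; apply: o1X. Qed.

Lemma C0_dis : [disjoint C o0 & RR].
Proof.
case: hT0 => T0 [e0 m0].
have : T0 \in [set T0] by rewrite in_set1.
rewrite -e0 inE => /andP[/imsetP[x xV ex] dj]; subst T0.
by rewrite (C_same (m0 o0 _)).
Qed.

Lemma C1 : C o1 = C o0.
Proof.
case: hT0 => T0 [e0 m0].
have : T0 \in [set T0] by rewrite in_set1.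
rewrite -e0 inE => /andP[/imsetP[x xV ex] dj]; subst T0.
by rewrite (C_same (m0 o0 _)) // (C_same (m0 o1 _)).
Qed.

Definition rho v := if [pick r in C v :&: RR] is Some r then r else o0.

Lemma rho_in v : v \in V -> rho v \in C v.
Proof.
move=> vV; rewrite /rho; case: pickP => [r|none]; first by case/setIP.
have dj : [disjoint C v & RR].
  by rewrite -setI_eq0; apply/eqP/setP => x; rewrite none inE.
by rewrite (dis_C0 vV dj) self_C // o0V.
Qed.

Lemma rho_cases v : rho v = o0 \/ rho v \in RR.
Proof. by rewrite /rho; case: pickP => [r /setIP[]|]; [right|left]. Qed.

Lemma rho_same v u : u \in C v -> rho u = rho v.
Proof. by move=> uc; rewrite /rho (C_same uc). Qed.

Lemma rho_RR r : r \in RR -> rho r = r.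
Proof.
move=> rR; have rV : r \in V by case/setDP: rR.
have rc : r \in C r :&: RR by rewrite inE self_C.
have : #|C r :&: RR| = 1.
  apply: hsing; first by apply/imsetP; exists r.
  by rewrite -setI_eq0; apply/set0Pn; exists r.
move/eqP/cards1P => [x ex]; move: (rc); rewrite ex in_set1 => /eqP rx; subst x.
rewrite /rho; case: pickP => [r'|/(_ r)]; first by rewrite ex in_set1 => /eqP.
by rewrite rc.
Qed.

Lemma rho_o0 : rho o0 = o0.
Proof.
rewrite /rho; case: pickP => [r /setIP[rc rR]|//].
by rewrite (disjointFr C0_dis rc) in rR.
Qed.

Lemma rho_o1 : rho o1 = o0.
Proof. by rewrite /rho C1 -/(rho o0) rho_o0. Qed.

Lemma RR_notX r : r \in RR -> r \notin Xs.
Proof. by case/setDP => _; apply: contra; apply: (subsetP X_low). Qed.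

Lemma rho_R0 v : rho v \in R0.
Proof. by rewrite XR0; case: (rho_cases v) => [->|/RR_notX//]; rewrite -XR0 o0R. Qed.

Lemma X_ne_rho v : v \in Xs -> v != rho v.
Proof. by move=> vX; apply: contraTneq (rho_R0 v) => <-; rewrite XR0 vX. Qed.

Lemma rho_fix w : w \in V -> w \in R0 -> rho w = w.
Proof.
move=> wV wR; case: (boolP (w \in low n k)) => wl.
  by rewrite (lowR0 wl wR) rho_o0.
by apply: rho_RR; rewrite inE wl.
Qed.

Definition Pd v m := [exists s : m.-tuple 'I_n, path A v s && (last v s == rho v)].
Definition dist v := find (Pd v) (iota 0 n).

Lemma Pd_ex v : v \in V -> has (Pd v) (iota 0 n).
Proof.
move=> vV; have := rho_in vV; rewrite compE => /andP[_].
case/connectP => s pth ls; move: ls; case: (shortenP pth) => s' pth' us' _ ls.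
have lt : size s' < n.
  by have := max_card (mem (v :: s')); rewrite card_ord (card_uniqP us').
apply/hasP; exists (size s'); first by rewrite mem_iota.
by apply/existsP; exists (in_tuple s'); rewrite /= pth' -ls eqxx.
Qed.

Lemma dist_spec v : v \in V -> Pd v (dist v) /\ dist v < n.
Proof.
move=> vV; have h := Pd_ex vV.
have lt : dist v < n by rewrite -[X in _ < X](size_iota 0) -has_find.
split => //; have := nth_find 0 h; rewrite nth_iota //.
Qed.

Lemma dist_min v m : m < n -> Pd v m -> dist v <= m.
Proof.
move=> lt pm; rewrite leqNgt; apply/negP => lt2.
by have := before_find 0 lt2; rewrite nth_iota // add0n pm.
Qed.

Lemma dist_step v : v \in V -> v != rho v -> exists2 u, A v u & dist u < dist v.
Proof.
move=> vV vr; case: (dist_spec vV) => /existsP[s /andP[ps /eqP ls]] dn.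
have ss := size_tuple s.
case: (tval s) ps ls ss => [|u s'] /=; first by move=> _ lv; move: vr; rewrite -lv eqxx.
move=> /andP[vu ps'] ls ss.
exists u => //.
have uc : u \in C v by case: (adjV vu) => _ uV _; rewrite compE uV connect1.
have : Pd u (size s').
  by apply/existsP; exists (in_tuple s'); rewrite /= ps' ls (rho_same uc) eqxx.
move/(dist_min _); rewrite -ss; move=> H; apply: leq_ltn_trans (H _) _ => //.
by apply: ltn_trans dn; rewrite -ss.
Qed.

Definition pF : {ffun 'I_n -> 'I_n} :=
  [ffun v => if v \in Xs then odflt v [pick u | A v u && (dist u < dist v)] else v].

Lemma pF_out v : v \notin Xs -> pF v = v.
Proof. by rewrite ffunE => /negbTE ->. Qed.

Lemma pF_in v : v \in Xs -> A v (pF v) /\ dist (pF v) < dist v.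
Proof.
move=> vX; rewrite ffunE vX; case: pickP => [u /andP[]//|none].
case: (dist_step (XV vX) (X_ne_rho vX)) => u vu du.
by move: (none u); rewrite vu du.
Qed.

Lemma pF_VC v : v \in V -> pF v \in C v.
Proof.
move=> vV; case: (boolP (v \in Xs)) => vX; last by rewrite pF_out // self_C.
case: (pF_in vX) => vu _; case: (adjV vu) => _ uV _.
by rewrite compE uV connect1.
Qed.

Lemma iter_VC v t : v \in V -> iter t pF v \in C v.
Proof.
move=> vV; elim: t => [|t IH]; first exact: self_C.
rewrite iterS; have iV : iter t pF v \in V by move: IH; rewrite compE => /andP[].
by have := pF_VC iV; rewrite (C_same IH).
Qed.

Lemma pF_reach d v : dist v <= d -> v \in V -> exists t, iter t pF v \in R0.
Proof.
elim: d v => [|d IH] v dv vV; (case: (boolP (v \in Xs)) => vX; last by exists 0; rewrite XR0).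
  by case: (pF_in vX) => _; rewrite ltnNge (leq_trans dv (leq0n _)).
case: (pF_in vX) => vu du.
have [t ht] : exists t, iter t pF (pF v) \in R0.
  apply: IH; first by rewrite -ltnS (leq_trans du dv).
  by case: (adjV vu).
by exists t.+1; rewrite iterSr.
Qed.

Lemma pF_valid : valid R0 pF.
Proof.
have fx : fixes R0 pF by apply/fixesP => r; rewrite XR0 => /pF_out.
rewrite /valid fx /=; apply/forallP => v.
case: (boolP (v \in V)) => vV.
  by case: (pF_reach (leqnn _) vV) => t ht; apply: reach fx ht.
have vR : v \in R0 by rewrite XR0; apply: contra vV; apply: XV.
by apply: (reach (t:=0)) fx vR.
Qed.

Lemma pF_root v : v \in V -> rootf pF v = rho v.
Proof.
move=> vV; have h := iter_VC #|'I_n| vV.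
have hV : rootf pF v \in V by move: h; rewrite compE => /andP[].
by rewrite -(rho_fix hV (rtR pF_valid v)); apply: rho_same.
Qed.

Lemma pF_o1 : rootf pF o1 = o0.
Proof. by rewrite pF_root ?o1V // rho_o1. Qed.

Lemma edgeF a b : A a b -> (a \in Xs /\ b = pF a) \/ (b \in Xs /\ a = pF b).
Proof.
move=> ab; case: (adjV ab) => aV bV nab.
have he : forall w, w \notin R0 -> A w (pF w).
  by move=> w; rewrite XR0 negbK => /pF_in[].
have [pa la ua na _] := traj_spec pF_valid he (erefl (depth R0 pF a)).
have [pb lb ub nb _] := traj_spec pF_valid he (erefl (depth R0 pF b)).
have lab : last a (traj R0 pF (depth R0 pF a) a) = last b (traj R0 pF (depth R0 pF b) b).
  rewrite la lb !pF_root //; apply: rho_same.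
  by rewrite (adjC ab) self_C.
case: (two_paths (@adj_sym n F) hacyc ab nab ua ub pa pb lab) => [h|h].
  rewrite na in h; left; split => //.
  by apply: contraTT nab => /pF_out e; rewrite -h e eqxx.
rewrite nb in h; right; split => //.
by apply: contraTT nab => /pF_out e; rewrite -h e eqxx.
Qed.

Lemma Phi_pF : Phi pF = F.
Proof.
transitivity (gV F, gE F); last by rewrite /gV /gE -surjective_pairing.
rewrite /Phi; congr (_, _).
- apply/setP => w; apply/idP/idP.
    rewrite in_setU => /orP[/lowV//|/imsetP[x xX ->]].
    by have := pF_VC (XV xX); rewrite compE => /andP[].
  move=> wV; rewrite in_setU; case: (boolP (w \in low n k)) => //= wl.
  have wR : w \in RR by rewrite inE wl.
  have c2 := htree2 (imset_f (Defs.comp F) wV).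
  rewrite (cardsD1 w) self_C // add1n ltnS card_gt0 in c2.
  case/set0Pn: c2 => u; rewrite !inE => /andP[uw /andP[_ wu]].
  case/connectP: wu => [[|z s] /=]; first by move=> _ e; rewrite e eqxx in uw.
  case/andP => wz _ _.
  case: (edgeF wz) => [[wX _]|[zX ->]].
    by move: wl; rewrite (subsetP X_low _ wX).
  by apply/imsetP; exists z.
- apply/setP => e; apply/imsetP/idP.
    by case=> v vX ->; case: (pF_in vX).
  move=> eE; have := hsimple; move/forallP/(_ e)/implyP/(_ eE) => /andP[c2 _].
  case/cards2P: c2 => a [b [ab ee]]; subst e.
  case: (edgeF eE) => [[aX ->]|[bX ->]]; first by exists a.
  by exists b; rewrite // set2C.
Qed.

End Bwd.

End Graph.


Lemma card_Xs n k : k < n -> #|Xs n k| = k.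
Proof.
move=> hn.
pose f := fun j : 'I_k => (Ordinal (leq_ltn_trans (ltn_ord j) hn) : 'I_n).
have -> : Xs n k = f @: setT.
  apply/setP => i; rewrite /Xs inE; apply/idP/imsetP.
    case/andP => i0 ik.
    have lt : i.-1 < k by lia.
    by exists (Ordinal lt) => //; apply: val_inj => /=; lia.
  by case=> j _ ->; rewrite /= ltn_ord.
rewrite card_imset ?cardsT ?card_ord //.
by move=> a b /(congr1 val) /= [] /val_inj.
Qed.

Unset Implicit Arguments.
Set Strict Implicit.

Theorem theorem5p16 (k n : nat) (hk : 1 <= k) (hn : k.+1 <= n) :
  counts (good n k) (n ^ k.-1).
Proof.
set Av := [set p : {ffun 'I_n -> 'I_n} | valid (R0 n k) p && (rootf p (o1 hk hn) == o0 hn)].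
exists (map (Phi k) (enum Av)); split; [|split].
- rewrite map_inj_in_uniq ?enum_uniq // => p q; rewrite !mem_enum !inE.
  by move=> /andP[vp _] /andP[vq _]; apply: Phi_inj.
- move=> F; split.
    case/mapP => p; rewrite mem_enum inE => /andP[vp /eqP rp] ->.
    exact: (good_Phi (hk:=hk) (hn:=hn)).
  move=> gF; rewrite -(Phi_pF hn gF); apply: map_f.
  by rewrite mem_enum inE (pF_valid hn gF) (pF_o1 hk hn gF) eqxx.
- rewrite size_map -cardE.
  have o1R : o1 hk hn \notin R0 n k by rewrite XR0 negbK o1X.
  have := count_root o1R (o0R hn).
  have cR : #|R0 n k| = n - k by rewrite /R0 (cardsCs (~: Xs n k)) setCK card_ord card_Xs.
  rewrite card_ord cR.
  have -> : n - (n - k) = k by lia.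
  move=> e.
  have ek : n ^ k = n ^ k.-1 * n by rewrite -expnSr; congr (_ ^ _); lia.
  apply/eqP; rewrite -(eqn_pmul2r (leq_ltn_trans (leq0n _) hn)); apply/eqP.
  by rewrite -ek -e.
Qed.
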